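(* Let $G$ be a finite group, let $\alpha\in\operatorname{Aut}G$, let $x,y\in G$, and let $m$ be a positive integer. Let $A=G\rtimes\langle\alpha\rangle$ be the semidirect product, with multiplication $(g,\alpha^i)(h,\alpha^j)=(g\,\alpha^i(h),\alpha^{i+j})$. Then there exists $z\in G$ with $$y\,\alpha(y)\cdots\alpha^{m-1}(y)=z^{-1}\,x\,\alpha(x)\cdots\alpha^{m-1}(x)\,\alpha^m(z)$$ if and only if the $m$-th powers of the elements $(x,\alpha)$ and $(y,\alpha)$ of $A$ are conjugate in $A$.
   Context: Here $\langle\alpha\rangle$ is the (finite cyclic) subgroup of $\operatorname{Aut}G$ generated by $\alpha$. The displayed condition says that the cocycles $\hat{\mathbb{Z}}\to G$ determined by $x\alpha(x)\cdots\alpha^{m-1}(x)$ and $y\alpha(y)\cdots\alpha^{m-1}(y)$ are cohomologous when $1\in\hat{\mathbb{Z}}$ acts on $G$ by $\alpha^m$. *)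

(* Defs.v *)
From mathcomp Require Import all_boot all_fingroup.
Set Implicit Arguments. Unset Strict Implicit. Unset Printing Implicit Defensive.
Import GroupScope.
Local Open Scope group_scope.

(* Concrete model of the semidirect product A = G ⋊ <[alpha]>, where G is a
   subgroup of gT and alpha \in Aut G is a permutation of gT (acting trivially
   outside G).  *)
Section SD.
Variable gT : finGroupType.

Definition sd_mul (u v : gT * {perm gT}) : gT * {perm gT} :=
  (u.1 * u.2 v.1, u.2 * v.2).

Definition sd_inv (u : gT * {perm gT}) : gT * {perm gT} :=
  ((u.2^-1) (u.1^-1), u.2^-1).

Definition sd_one : gT * {perm gT} := (1, 1).

Fixpoint sd_pow (u : gT * {perm gT}) (n : nat) : gT * {perm gT} :=
  if n is n'.+1 then sd_mul u (sd_pow u n') else sd_one.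

Definition in_sd (G : {set gT}) (alpha : {perm gT}) (u : gT * {perm gT}) : bool :=
  (u.1 \in G) && (u.2 \in <[alpha]>).

Definition sd_conj (G : {set gT}) (alpha : {perm gT}) (u v : gT * {perm gT}) : Prop :=
  exists2 c, in_sd G alpha c & sd_mul (sd_inv c) (sd_mul u c) = v.

Definition twprod (alpha : {perm gT}) (x : gT) (m : nat) : gT :=
  \prod_(i < m) (alpha ^+ i) x.
End SD.

(* Main.v *)
Require Import Defs.
From mathcomp Require Import all_boot all_fingroup.
Import GroupScope.
Local Open Scope group_scope.

Set Implicit Arguments.
Unset Strict Implicit.
Section H.
Variables (gT : finGroupType) (G : {group gT}).

Lemma autM (a : {perm gT}) u v : a \in Aut G -> u \in G -> v \in G ->
  a (u * v) = a u * a v.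
Proof. move=> Aa Gu Gv; by rewrite -(autmE Aa) morphM. Qed.

Lemma autV (a : {perm gT}) u : a \in Aut G -> u \in G -> a (u^-1) = (a u)^-1.
Proof. move=> Aa Gu; by rewrite -(autmE Aa) morphV. Qed.

Lemma aut1 (a : {perm gT}) : a \in Aut G -> a 1 = 1.
Proof. move=> Aa; by rewrite -(autmE Aa) morph1. Qed.

Lemma autprod (a : {perm gT}) n (F : 'I_n -> gT) : a \in Aut G ->
  (forall i, F i \in G) -> a (\prod_(i < n) F i) = \prod_(i < n) a (F i).
Proof.
move=> Aa FG; have := @morph_prod _ _ _ (autm Aa) _ (index_enum 'I_n) xpredT F (fun i _ => FG i).
by rewrite autmE; apply.
Qed.

Lemma twprodG (alpha : {perm gT}) x m : alpha \in Aut G -> x \in G ->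
  twprod alpha x m \in G.
Proof.
move=> Aa Gx; rewrite /twprod; apply: group_prod => i _.
by apply: Aut_closed => //; rewrite groupX.
Qed.

Lemma sd_powE (alpha : {perm gT}) x n : alpha \in Aut G -> x \in G ->
  sd_pow (x, alpha) n = (twprod alpha x n, alpha ^+ n).
Proof.
move=> Aa Gx; elim: n => [|n IH] /=; first by rewrite /twprod big_ord0.
rewrite IH /sd_mul /= expgS; congr (_, _).
rewrite /twprod big_ord_recl expg0 perm1; congr (_ * _).
rewrite autprod // => [|i]; last by apply: Aut_closed => //; rewrite groupX.
apply: eq_bigr => i _; by rewrite -permM -expgSr.
Qed.

Definition R (alpha : {perm gT}) m a b :=
  exists2 w, w \in G & b = w^-1 * a * (alpha ^+ m) w.

Lemma R_sym alpha m a b : alpha \in Aut G -> R alpha m a b -> R alpha m b a.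
Proof.
move=> Aa [w Gw ->]; exists w^-1; rewrite ?groupV //.
have Am : alpha ^+ m \in Aut G by rewrite groupX.
by rewrite invgK autV // !mulgA mulgV mul1g -mulgA mulgV mulg1.
Qed.

Lemma R_trans alpha m a b c : alpha \in Aut G ->
  R alpha m a b -> R alpha m b c -> R alpha m a c.
Proof.
move=> Aa [w1 G1 ->] [w2 G2 ->]; exists (w1 * w2); rewrite ?groupM //.
have Am : alpha ^+ m \in Aut G by rewrite groupX.
by rewrite autM // invMg !mulgA.
Qed.

Lemma R_equiv alpha m (b : {perm gT}) u v : alpha \in Aut G ->
  b \in <[alpha]> -> u \in G -> R alpha m u v -> R alpha m (b u) (b v).
Proof.
move=> Aa /cycleP [k ->] Gu [w Gw ->].
have Am : alpha ^+ m \in Aut G by rewrite groupX.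
have Ak : alpha ^+ k \in Aut G by rewrite groupX.
exists ((alpha ^+ k) w); first by apply: Aut_closed.
rewrite !autM ?groupM ?groupV ?autV //; last by apply: Aut_closed.
by rewrite -!permM (commuteX2 _ _ (commute_refl alpha)).
Qed.

Lemma R_step alpha y m : alpha \in Aut G -> y \in G -> (0 < m)%N ->
  R alpha m (twprod alpha y m) (alpha (twprod alpha y m)).
Proof.
move=> Aa Gy; case: m => // m _; exists y => //.
rewrite /twprod autprod // => [|i]; last by apply: Aut_closed => //; rewrite groupX.
have E : forall i : 'I_m.+1, alpha ((alpha ^+ i) y) = (alpha ^+ i.+1) y.
  by move=> i; rewrite -permM -expgSr.
rewrite (eq_bigr _ (fun i _ => E i)) [in RHS]big_ord_recl expg0 perm1.
rewrite mulgA mulVg mul1g [in LHS]big_ord_recr /=; congr (_ * _).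
Qed.

End H.

Theorem lemma6p2 (gT : finGroupType) (G : {group gT}) (alpha : {perm gT})
  (x y : gT) (m : nat) :
  alpha \in Aut G -> x \in G -> y \in G -> (0 < m)%N ->
  (exists2 z, z \in G &
     twprod alpha y m = z^-1 * twprod alpha x m * (alpha ^+ m) z)
  <-> sd_conj G alpha (sd_pow (x, alpha) m) (sd_pow (y, alpha) m).
Proof.
move=> Aa Gx Gy m0; rewrite (sd_powE m Aa Gx) (sd_powE m Aa Gy).
have Am : alpha ^+ m \in Aut G by rewrite groupX.
split.
  move=> [z Gz E]; exists (z, 1); first by rewrite /in_sd /= Gz group1.
  rewrite /sd_mul /sd_inv /= invg1 !perm1 mul1g mulg1 E mulgA; congr (_, _).
move=> [[g b] /andP[/= Gg Bb] E].
have Ab : b \in Aut G by case/cycleP: Bb => k ->; rewrite groupX.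
have Abi : b^-1 \in Aut G by rewrite groupV.
have GP := twprodG m Aa Gx.
have GQ := twprodG m Aa Gy.
have E1 := congr1 fst E; rewrite /= in E1.
have GX : g^-1 * twprod alpha x m * (alpha ^+ m) g \in G.
  by rewrite !groupM ?groupV // Aut_closed.
have EQ : b (twprod alpha y m) = g^-1 * twprod alpha x m * (alpha ^+ m) g.
  rewrite -E1 -(autM Abi) ?groupV ?groupM ?Aut_closed //.
  by rewrite permKV mulgA.
have R1 : R G alpha m (twprod alpha x m) (b (twprod alpha y m)).
  by exists g.
have R2 : forall k, R G alpha m (twprod alpha y m) ((alpha ^+ k) (twprod alpha y m)).
  elim=> [|k IH]; first by exists 1; rewrite ?group1 // expg0 perm1 invg1 mul1g (aut1 Am) mulg1.
  apply: (R_trans Aa IH).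
  have := R_equiv (b := alpha ^+ k) Aa (mem_cycle _ _) GQ (R_step Aa Gy m0).
  by rewrite -permM -expgS.
case/cycleP: Bb R1 => k ->{b Ab Abi EQ E E1} R1.
have [z Gz Ez] := R_trans Aa R1 (R_sym Aa (R2 k)).
by exists z.
Qed.
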